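(* Let $a<b$, $F:(a,b)\to\mathcal{K}(\mathbb{R}^n)$, $x_0\in(a,b)$, $\alpha>0$, and suppose $F$ is metrically $\alpha$-differentiable at $x_0$ with constant $L>0$, i.e. $F$ is metrically differentiable at $x_0$ and there is $\delta>0$ such that $\sup_{y\in F(x_0)}\mathrm{haus}([x_0,x]^MF|_y,D^M_+F(x_0)|_y)\le L|x-x_0|^\alpha$ for $0<x-x_0<\delta$ and $\sup_{y\in F(x_0)}\mathrm{haus}([x_0,x]^MF|_y,D^M_-F(x_0)|_y)\le L|x-x_0|^\alpha$ for $0<x_0-x<\delta$. Then for all $x\in(a,b)$ with $|x-x_0|<\delta$, $$\mathrm{haus}(F(x),L^MF(x))\le L|x-x_0|^{1+\alpha}.$$
   Context: $\mathcal{K}(\mathbb{R}^n)$ is the set of nonempty compact subsets of $\mathbb{R}^n$, $|\cdot|$ the Euclidean norm, $\mathrm{dist}(x,A)=\min_{a\in A}|x-a|$, $\mathrm{haus}$ the Hausdorff distance. For $a\in\mathbb{R}^n$, $B\in\mathcal{K}(\mathbb{R}^n)$, $\Pi_B(a)=\{b\in B:|a-b|=\mathrm{dist}(a,B)\}$; for $A,B\in\mathcal{K}(\mathbb{R}^n)$, $\Pi(A,B)=\{(a,b)\in A\times B: a\in\Pi_A(b)\text{ or }b\in\Pi_B(a)\}$. For $x\ne x_0$, $y_0\in F(x_0)$: $[x_0,x]^MF|_{y_0}=\{\frac{y-y_0}{x-x_0}:(y_0,y)\in\Pi(F(x_0),F(x))\}$. $F$ is metrically differentiable from the right at $x_0$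 if for every $y\in F(x_0)$ there is a nonempty set $D^M_+F(x_0)|_y$ with $\sup_{y\in F(x_0)}\mathrm{haus}(D^M_+F(x_0)|_y,[x_0,x]^MF|_y)\to0$ as $x\to x_0^+$; from the left analogously with $D^M_-F(x_0)|_y$ and $x\to x_0^-$; metrically differentiable means both. The local metric linear approximant is $L^MF(x)=\bigcup_{y\in F(x_0)}\big(\{y\}+(x-x_0)D^M_+F(x_0)|_y\big)$ for $x\ge x_0$ and $L^MF(x)=\bigcup_{y\in F(x_0)}\big(\{y\}+(x-x_0)D^M_-F(x_0)|_y\big)$ for $x<x_0$, where $\{c\}+\lambda A=\{c+\lambda a:a\in A\}$. *)

(* Defs.v *)
From HB Require Import structures.
From mathcomp Require Import all_boot all_order all_algebra.
From mathcomp Require Import all_classical all_reals all_analysis.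
Set Implicit Arguments. Unset Strict Implicit. Unset Printing Implicit Defensive.
Import Order.TTheory GRing.Theory Num.Theory.
Import numFieldNormedType.Exports.
Local Open Scope classical_set_scope.
Local Open Scope ring_scope.

Section MetricDiff.
Variables (R : realType) (n : nat).
Notation V := 'rV[R]_n.

Definition enorm (v : V) : R := Num.sqrt (\sum_(i < n) v ord0 i ^+ 2).

Definition edist (x : V) (A : set V) : \bar R :=
  ereal_inf [set (enorm (x - a))%:E | a in A].

Definition haus (A B : set V) : \bar R :=
  maxe (ereal_sup [set edist a B | a in A]) (ereal_sup [set edist b A | b in B]).

Definition proj (B : set V) (a : V) : set V :=
  [set b | B b /\ (enorm (a - b))%:E = edist a B].

Definition metric_pairs (A B : set V) : set (V * V) :=
  [set p | A p.1 /\ B p.2 /\ (proj A p.2 p.1 \/ proj B p.1 p.2)].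

Definition metric_quot (F : R -> set V) (x0 x : R) (y0 : V) : set V :=
  [set (x - x0)^-1 *: (y - y0) | y in [set y | metric_pairs (F x0) (F x) (y0, y)]].

Definition sup_haus (S : set V) (A B : V -> set V) : \bar R :=
  ereal_sup [set haus (A y) (B y) | y in S].

Definition metric_diff_right (a b : R) (F : R -> set V) (x0 : R) (Dp : V -> set V) :=
  (forall y, F x0 y -> Dp y !=set0) /\
  forall e : R, 0 < e -> exists d : R, 0 < d /\
    forall x : R, a < x < b -> x0 < x < x0 + d ->
      (sup_haus (F x0) Dp (metric_quot F x0 x) <= e%:E)%E.

Definition metric_diff_left (a b : R) (F : R -> set V) (x0 : R) (Dm : V -> set V) :=
  (forall y, F x0 y -> Dm y !=set0) /\
  forall e : R, 0 < e -> exists d : R, 0 < d /\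
    forall x : R, a < x < b -> x0 - d < x < x0 ->
      (sup_haus (F x0) Dm (metric_quot F x0 x) <= e%:E)%E.

Definition metric_lin_approx (F : R -> set V) (x0 : R) (Dp Dm : V -> set V) (x : R) : set V :=
  if x0 <= x then
    [set z | exists y, F x0 y /\ exists d, Dp y d /\ z = y + (x - x0) *: d]
  else
    [set z | exists y, F x0 y /\ exists d, Dm y d /\ z = y + (x - x0) *: d].

End MetricDiff.

(* Main.v *)
Require Import Defs.
From HB Require Import structures.
From mathcomp Require Import all_boot all_order all_algebra.
From mathcomp Require Import all_classical all_reals all_analysis.
Import Order.TTheory GRing.Theory Num.Theory.
Import numFieldNormedType.Exports.
Local Open Scope classical_set_scope.
Local Open Scope ring_scope.

Section H.
Variables (R : realType) (n : nat).
Notation V := 'rV[R]_n.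

Lemma enormZ (k : R) (v : V) : enorm (k *: v) = `|k| * enorm v.
Proof.
rewrite /enorm.
under eq_bigr do rewrite mxE exprMn.
by rewrite -mulr_sumr sqrtrM ?sqrtr_sqr // sqr_ge0.
Qed.

Lemma enormN (v : V) : enorm (- v) = enorm v.
Proof. by rewrite -scaleN1r enormZ normrN1 mul1r. Qed.

Lemma enormB (u v : V) : enorm (u - v) = enorm (v - u).
Proof. by rewrite -enormN opprB. Qed.

Lemma enorm_ge0 (v : V) : 0 <= enorm v.
Proof. exact: sqrtr_ge0. Qed.

Lemma enorm_cont (z : V) : continuous (fun y : V => enorm (z - y)).
Proof.
move=> y; rewrite /enorm.
apply: (@continuous_comp _ _ _ (fun y : V => \sum_(i < n) (z - y) ord0 i ^+ 2)); last exact: sqrt_continuous.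
have : forall s : seq 'I_n, continuous (fun y : V => \sum_(i <- s) (z - y) ord0 i ^+ 2).
  elim=> [|i s IH].
    by under eq_fun do rewrite big_nil; exact: cst_continuous.
  under eq_fun do rewrite big_cons.
  move=> t.
  apply: (@continuousD _ _ _ (fun y : V => (z - y) ord0 i ^+ 2) (fun y : V => \sum_(j <- s) (z - y) ord0 j ^+ 2)); last exact: IH.
  have hc : continuous (fun y : V => (z - y) ord0 i).
    move=> u; apply: (@continuous_comp _ _ _ (fun y : V => z - y) (fun M : V => M ord0 i)); last exact: coord_continuous.
    apply: (@continuousB _ _ _ (fun=> z) id); [exact: cst_continuous| by move=> ?; apply: cvg_id].
  have := @continuousM _ _ (fun y : V => (z - y) ord0 i) (fun y : V => (z - y) ord0 i) t (hc t) (hc t).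
  by congr ({for _, continuous _}); apply: funext => u /=; rewrite expr2.
by apply.
Qed.

Lemma proj_ex (A : set V) (z : V) : A !=set0 -> compact A -> exists y, Defs.proj A z y.
Proof.
move=> A0 cA.
have [c /set_mem cA' cmin] := @compact_EVT_min _ _ (fun y : V => enorm (z - y)) A A0 cA (continuous_subspaceT (enorm_cont z)).
exists c; split => //.
apply/eqP; rewrite eq_le; apply/andP; split.
  apply: le_ereal_inf_tmp => _ [t At <-]; rewrite lee_fin; apply: cmin; exact/mem_set.
by apply: ereal_inf_lbound; exists c.
Qed.


Lemma hq_eq (h : R) (u v : V) : h != 0 -> h *: (h^-1 *: u - v) = u - h *: v.
Proof. by move=> h0; rewrite scalerBr scalerA mulfV // scale1r. Qed.

Lemma edist_le (w : V) (A : set V) (c : R) (a : V) : A a -> enorm (w - a) <= c ->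
  (Defs.edist w A <= c%:E)%E.
Proof. by move=> Aa le; apply: ge_ereal_inf; exists (enorm (w - a))%:E; [exists a|rewrite lee_fin]. Qed.

Lemma core (F : R -> set V) (x0 x K : R) (D : V -> set V) (LM : set V) :
  x != x0 -> 0 <= K ->
  (forall z, F x z -> exists y, Defs.proj (F x0) z y) ->
  (forall y, F x0 y -> (haus (metric_quot F x0 x y) (D y) <= K%:E)%E) ->
  LM = [set w | exists y, F x0 y /\ exists d, D y d /\ w = y + (x - x0) *: d] ->
  (haus (F x) LM <= (`|x - x0| * K)%:E)%E.
Proof.
move=> xx0 K0 hproj H ->.
have h0 : x - x0 != 0 by rewrite subr_eq0.
have ah0 : 0 < `|x - x0| by rewrite normr_gt0.
rewrite /haus ge_max; apply/andP; split; apply: ge_ereal_sup.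
- move=> _ [z Fz <-].
  have [y0 [Fy0 py0]] := hproj z Fz.
  set q := (x - x0)^-1 *: (z - y0).
  have Qq : metric_quot F x0 x y0 q.
    by exists z => //; split => //; split => //; left.
  have e1 : (Defs.edist q (D y0) <= K%:E)%E.
    apply: le_trans (H y0 Fy0); rewrite /haus le_max; apply/orP; left.
    by apply: ereal_sup_ubound; exists q.
  apply/lee_addgt0Pr => e e0.
  have : (Defs.edist q (D y0) < (K + e / `|x - x0|)%:E)%E.
    by apply: le_lt_trans e1 _; rewrite lte_fin ltrDl divr_gt0.
  move=> /ereal_inf_lt [_ [d Dd <-]]; rewrite lte_fin => lt.
  rewrite -EFinD; apply: (@edist_le _ _ _ (y0 + (x - x0) *: d)).
    by exists y0; split => //; exists d.
  have -> : z - (y0 + (x - x0) *: d) = (x - x0) *: (q - d).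
    by rewrite hq_eq // opprD addrA.
  rewrite enormZ.
  have -> : `|x - x0| * K + e = `|x - x0| * (K + e / `|x - x0|).
    by rewrite mulrDr mulrCA mulfV ?mulr1 // gt_eqF.
  by rewrite ler_pM2l // ltW.
- move=> _ [w [y [Fy [d [Dd ->]]]] <-].
  have e1 : (Defs.edist d (metric_quot F x0 x y) <= K%:E)%E.
    apply: le_trans (H y Fy); rewrite /haus le_max; apply/orP; right.
    by apply: ereal_sup_ubound; exists d.
  apply/lee_addgt0Pr => e e0.
  have : (Defs.edist d (metric_quot F x0 x y) < (K + e / `|x - x0|)%:E)%E.
    by apply: le_lt_trans e1 _; rewrite lte_fin ltrDl divr_gt0.
  move=> /ereal_inf_lt [_ [_ [z [_ [Fz _]] <-] <-]]; rewrite lte_fin => lt.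
  rewrite -EFinD; apply: (@edist_le _ _ _ z) => //.
  have -> : y + (x - x0) *: d - z = (x - x0) *: (d - (x - x0)^-1 *: (z - y)).
    rewrite scalerBr scalerA mulfV // scale1r opprB.
    by rewrite [RHS]addrCA addrA.
  rewrite enormZ.
  have -> : `|x - x0| * K + e = `|x - x0| * (K + e / `|x - x0|).
    by rewrite mulrDr mulrCA mulfV ?mulr1 // gt_eqF.
  by rewrite ler_pM2l // ltW.
Qed.

End H.

Theorem mainTheorem3 (R : realType) (n : nat) (a b : R) (F : R -> set 'rV[R]_n)
  (x0 alpha L delta : R) (Dp Dm : 'rV[R]_n -> set 'rV[R]_n) :
  a < b ->
  (forall x, a < x < b -> F x !=set0 /\ compact (F x)) ->
  a < x0 < b ->
  0 < alpha -> 0 < L ->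
  metric_diff_right a b F x0 Dp ->
  metric_diff_left a b F x0 Dm ->
  0 < delta ->
  (forall x, a < x < b -> 0 < x - x0 < delta ->
     (sup_haus (F x0) (metric_quot F x0 x) Dp <= (L * `|x - x0| `^ alpha)%:E)%E) ->
  (forall x, a < x < b -> 0 < x0 - x < delta ->
     (sup_haus (F x0) (metric_quot F x0 x) Dm <= (L * `|x - x0| `^ alpha)%:E)%E) ->
  forall x, a < x < b -> `|x - x0| < delta ->
    (haus (F x) (metric_lin_approx F x0 Dp Dm x) <= (L * `|x - x0| `^ (1 + alpha))%:E)%E.
Proof.
move=> ab Fc x0ab a0 L0 [Dp0 _] [Dm0 _] d0 Hp Hm x xab xd.
have [cF0 cF1] := Fc x0 x0ab.
have hproj : forall z, exists y, Defs.proj (F x0) z y by move=> z; exact: proj_ex.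
case: (eqVneq x x0) => [->|xx0].
  rewrite subrr normr0 powR0 ?mulr0; last by rewrite gt_eqF // addr_gt0.
  have en0 : forall v : 'rV[R]_n, enorm (v - v) <= 0.
    by move=> v; rewrite subrr -(scale0r (0 : 'rV[R]_n)) enormZ normr0 mul0r.
  rewrite /haus /metric_lin_approx lexx ge_max; apply/andP; split; apply: ge_ereal_sup.
  - move=> _ [z Fz <-]; apply: (@edist_le _ _ _ _ _ z) => //.
    have [d Dd] := Dp0 z Fz.
    by exists z; split => //; exists d; split => //; rewrite subrr scale0r addr0.
  - move=> _ [w [y [Fy [d [Dd ->]]]] <-]; apply: (@edist_le _ _ _ _ _ y) => //.
    by rewrite subrr scale0r addr0.
have hpos : 0 < `|x - x0| by rewrite normr_gt0 subr_eq0.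
rewrite powRD; last by rewrite normr_eq0 subr_eq0 xx0 implybT.
rewrite powRr1 ?normr_ge0 // mulrCA.
have K0 : 0 <= L * `|x - x0| `^ alpha by rewrite mulr_ge0 ?powR_ge0 // ltW.
case: (ltP x0 x) => hx.
- apply: (@core _ _ F x0 x _ Dp) => //.
  + move=> y Fy; apply: (le_trans _ (Hp x xab _)); first by apply: ereal_sup_ubound; exists y.
    by rewrite subr_gt0 hx /=; rewrite gtr0_norm ?subr_gt0 // in xd.
  + by rewrite /metric_lin_approx ltW.
- have hx' : x < x0 by rewrite lt_neqAle xx0 hx.
  apply: (@core _ _ F x0 x _ Dm) => //.

  + move=> y Fy; apply: (le_trans _ (Hm x xab _)); first by apply: ereal_sup_ubound; exists y.
    by rewrite subr_gt0 hx' /=; rewrite ltr0_norm ?subr_lt0 // opprB in xd.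
  + by rewrite /metric_lin_approx leNgt hx'.
Qed.
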